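(* Let $k$ be a field, $X$ a non-empty set, and for every $a\in X$ let $\sigma_a,\tau_a:X\to X$ be maps. Let ${\cal A}$ be the basic set-theoretic Yang–Baxter algebra associated with these data, i.e. the unital associative $k$-algebra generated by $1_{\cal A}$, $h_a$, $w_a$, $w_a^{-1}$ ($a\in X$) subject to the relations, for all $a,b\in X$, \[h_ah_b=\delta_{a,b}h_a,\quad w_a^{-1}w_a=w_aw_a^{-1}=1_{\cal A},\quad w_aw_b=w_{\sigma_a(b)}w_{\tau_b(a)},\quad w_ah_b=h_{\sigma_a(b)}w_a.\] Then for all $a,b,c\in X$, \[h_{\sigma_{\sigma_a(b)}(\sigma_{\tau_b(a)}(c))}=h_{\sigma_a(\sigma_b(c))}.\] If, in addition, $h_a=h_b$ implies $a=b$ for all $a,b\in X$, then for all $a,b,c\in X$, \[\sigma_a(\sigma_b(c))=\sigma_{\sigma_a(b)}(\sigma_{\tau_b(a)}(c)),\] and each $\sigma_a:X\to X$ is injective. *)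

(* Defs.v *)
From HB Require Import structures.
From mathcomp Require Import all_boot all_algebra.
Set Implicit Arguments. Unset Strict Implicit. Unset Printing Implicit Defensive.
Import GRing.Theory.
Local Open Scope ring_scope.

Definition YB_relations (k : fieldType) (X : Type) (sigma tau : X -> X -> X)
  (A : algType k) (h w winv : X -> A) : Prop :=
  [/\ (forall a, h a * h a = h a),
      (forall a b, a <> b -> h a * h b = 0),
      (forall a, winv a * w a = 1 /\ w a * winv a = 1),
      (forall a b, w a * w b = w (sigma a b) * w (tau b a)) &
      (forall a b, w a * h b = h (sigma a b) * w a)].

(* Main.v *)
Require Import Defs.
From HB Require Import structures.
From mathcomp Require Import all_boot all_algebra.
Local Open Scope ring_scope.
Import GRing.Theory.

Lemma cancel_rinv (R : pzRingType) (u v W V : R) : W * V = 1 -> u * W = v * W -> u = v.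
Proof. by move=> WV E; rewrite -(mulr1 u) -(mulr1 v) -WV !mulrA E. Qed.

Theorem proposition2p2 (k : fieldType) (X : Type) (x0 : X)
  (sigma tau : X -> X -> X) (A : algType k) (h w winv : X -> A) :
  YB_relations sigma tau h w winv ->
  (forall a b c,
     h (sigma (sigma a b) (sigma (tau b a) c)) = h (sigma a (sigma b c))) /\
  ((forall a b, h a = h b -> a = b) ->
     (forall a b c,
        sigma a (sigma b c) = sigma (sigma a b) (sigma (tau b a) c)) /\
     (forall a, injective (sigma a))).
Proof.
case=> hid horth winvP wYB whP.
have key : forall a b c,
     h (sigma (sigma a b) (sigma (tau b a) c)) = h (sigma a (sigma b c)).
  move=> a b c.
  apply: (@cancel_rinv _ _ _ (w a * w b) (winv b * winv a)).
    have [_ Hb] := winvP b; have [_ Ha] := winvP a.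
    by rewrite mulrA -(mulrA (w a)) Hb mulr1 Ha.
  have E1 : w a * w b * h c = h (sigma a (sigma b c)) * (w a * w b).
    by rewrite -mulrA whP mulrA whP !mulrA.
  have E2 : w a * w b * h c =
      h (sigma (sigma a b) (sigma (tau b a) c)) * (w a * w b).
    by rewrite wYB -mulrA whP mulrA whP !mulrA.
  by rewrite -E2 E1.
split => // hinj; split.
  by move=> a b c; apply: hinj; rewrite key.
move=> a b c E.
apply: hinj.
have [Ha1 Ha2] := winvP a.
have F : forall d, winv a * h (sigma a d) * w a = h d.
  by move=> d; rewrite -mulrA -whP mulrA Ha1 mul1r.
by rewrite -(F b) -(F c) E.
Qed.
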